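(* Let $n\ge 1$ and let $O:\{0,1\}^n\to\{-,0,+\}^n$ be a partial orientation of the $n$-cube that is partially Szabó–Welzl. Then $O$ can be extended to a unique sink orientation, i.e., there exists a unique sink orientation $O':\{0,1\}^n\to\{-,+\}^n$ with $O'(v)_i=O(v)_i$ for all $v\in\{0,1\}^n$ and $i\in[n]$ with $O(v)_i\neq 0$.
   Context: The $n$-cube $Q_n$ has vertex set $\{0,1\}^n$, two vertices being adjacent iff they differ in exactly one coordinate. A face of $Q_n$ is a set of the form $\{w\in\{0,1\}^n : w_j=u_j \text{ for all } j\notin I\}$ for some $u\in\{0,1\}^n$ and $I\subseteq[n]$; it spans the dimensions in $I$. A partial orientation is a function $O:\{0,1\}^n\to\{-,0,+\}^n$, where $O(v)_i=+$ means the half-edge of $v$ in dimension $i$ is outgoing, $O(v)_i=-$ incoming, and $O(v)_i=0$ unoriented (degenerate). An orientation is a partial orientation with no zero entries. A unique sink orientation (USO) is an orientation such that every non-empty face $f$ contains exactly one vertex $v$ with $O(v)_i=-$ for all dimensions $i$ spanned by $f$. A partial orientation $O$ is partially Szabó–Welzl if for any two distinct vertices $v,w$, either (1) $O(v)_i=O(w)_i=0$ for all $i$ with $v_i\neq w_i$, or (2) there exists $i$ with $v_i\neq w_i$ and $\{O(v)_i,O(w)_i\}=\{-,+\}$. *)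

(* Defs.v *)
From HB Require Import structures.
From mathcomp Require Import all_boot.
Set Implicit Arguments. Unset Strict Implicit. Unset Printing Implicit Defensive.

(* Signs of half-edges: Minus = incoming, Zero = unoriented, Plus = outgoing. *)
Inductive sign := Minus | Zero | Plus.
Definition sign_eqb (a b : sign) : bool :=
  match a, b with
  | Minus, Minus | Zero, Zero | Plus, Plus => true | _, _ => false end.
Lemma sign_eqP : Equality.axiom sign_eqb.
Proof. by case; case; constructor. Qed.
HB.instance Definition _ := hasDecEq.Build sign sign_eqP.

Definition vertex (n : nat) := {ffun 'I_n -> bool}.

Definition porient (n : nat) := vertex n -> 'I_n -> sign.

Definition face n (u : vertex n) (I : {set 'I_n}) : {set vertex n} :=
  [set w : vertex n | [forall j, (j \notin I) ==> (w j == u j)]].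

Definition is_orientation n (O : porient n) : Prop :=
  forall v i, O v i != Zero.

Definition sink_in n (O : porient n) (I : {set 'I_n}) (v : vertex n) : bool :=
  [forall i, (i \in I) ==> (O v i == Minus)].

Definition is_USO n (O : porient n) : Prop :=
  is_orientation O /\
  forall (u : vertex n) (I : {set 'I_n}),
    #|[set v in face u I | sink_in O I v]| = 1.

Definition partially_SW n (O : porient n) : Prop :=
  forall v w : vertex n, v != w ->
    (forall i, v i != w i -> O v i = Zero /\ O w i = Zero) \/
    (exists i, v i != w i /\
       ((O v i = Minus /\ O w i = Plus) \/ (O v i = Plus /\ O w i = Minus))).

Definition extends n (O O' : porient n) : Prop :=
  forall v i, O v i != Zero -> O' v i = O v i.

(* Main.v *)
Require Import Defs.
From mathcomp Require Import all_boot.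

Section S.
Variable n : nat.

Lemma card_face (u : vertex n) (I : {set 'I_n}) : #|face u I| = #|powerset I|.
Proof.
pose h := fun v : vertex n => [set i in I | v i != u i].
have hinj : {in face u I &, injective h}.
  move=> v w; rewrite !inE => /forallP Hv /forallP Hw /setP Hvw.
  apply/ffunP => j; case jI: (j \in I).
    move: (Hvw j); rewrite !inE jI /=.
    by case: (v j); case: (w j); case: (u j).
  by move: (Hv j) (Hw j); rewrite jI /= => /eqP -> /eqP ->.
rewrite -(card_in_imset hinj); apply: eq_card => S.
rewrite inE; apply/imsetP/idP.
  move=> [v _ ->]; apply/subsetP => i; rewrite inE => /andP [] //.
move=> SI.
exists [ffun j => if j \in S then ~~ u j else u j].
  rewrite inE; apply/forallP => j; apply/implyP => jI; rewrite ffunE.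
  case jS: (j \in S) => //; by rewrite (subsetP SI _ jS) in jI.
apply/setP => i; rewrite inE ffunE.
case iS: (i \in S); first by rewrite (subsetP SI _ iS); case: (u i).
by rewrite eqxx andbF.
Qed.

Lemma uso_of_sw (O : porient n) :
  (forall v i, O v i != Zero) ->
  (forall v w : vertex n, v != w -> exists i, v i != w i /\ O v i != O w i) ->
  is_USO O.
Proof.
move=> Hnz Hsw; split => // u I.
pose g := fun v : vertex n => [set i in I | O v i == Plus].
have ginj : {in face u I &, injective g}.
  move=> v w; rewrite !inE => /forallP Hv /forallP Hw Hvw.
  apply/eqP; apply/negPn/negP => /Hsw [i [Hi HO]].
  have iI : i \in I.
    apply/negPn/negP => iI.
    move: (Hv i) (Hw i); rewrite iI /= => /eqP e1 /eqP e2.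
    by rewrite e1 e2 eqxx in Hi.
  move/setP: Hvw => /(_ i); rewrite !inE iI /=.
  move: HO (Hnz v i) (Hnz w i).
  by case: (O v i); case: (O w i).
have Hsub : g @: face u I \subset powerset I.
  apply/subsetP => S /imsetP [v _ ->]; rewrite inE.
  apply/subsetP => i; rewrite inE => /andP [] //.
have Heq : g @: face u I = powerset I.
  apply/eqP; rewrite eqEcard Hsub /= (card_in_imset ginj) card_face //.
have : set0 \in g @: face u I by rewrite Heq inE sub0set.
move=> /imsetP [v0 v0F g0].
have sinkE : forall v, sink_in O I v = (g v == set0).
  move=> v; apply/forallP/eqP.
    move=> H; apply/setP => i; rewrite !inE.
    move: (H i); case: (i \in I) => //= /eqP -> //.
  move=> /setP H i; apply/implyP => iI; move: (H i) (Hnz v i).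
  by rewrite !inE iI /=; case: (O v i).
suff -> : [set v in face u I | sink_in O I v] = [set v0] by rewrite cards1.
apply/setP => v; rewrite !inE sinkE.
apply/andP/eqP.
  move=> [vF /eqP gv]; apply: ginj; [by rewrite inE| by [] | exact: etrans gv g0].
by move=> ->; rewrite -g0 eqxx; move: v0F; rewrite inE.
Qed.

End S.

Theorem mainTheorem1 (n : nat) (O : porient n) :
  1 <= n -> partially_SW O ->
  exists O' : porient n, is_USO O' /\ extends O O'.
Proof.
move=> _ Hsw.
pose O' := fun (v : vertex n) i =>
  match O v i with Zero => if v i then Plus else Minus | s => s end.
exists O'; split; last first.
  by move=> v i; rewrite /O'; case: (O v i).
apply: uso_of_sw.
  by move=> v i; rewrite /O'; case: (O v i) => //; case: (v i).
move=> v w vw; case: (Hsw v w vw).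
  move=> H.
  have [i Hi] : exists i, v i != w i.
    apply/existsP; apply: contraR vw => /existsPn H'.
    by apply/eqP/ffunP => i; move: (H' i); rewrite negbK => /eqP.
  exists i; split => //; case: (H i Hi) => e1 e2.
  rewrite /O' e1 e2; move: Hi; by case: (v i); case: (w i).
move=> [i [Hi H]]; exists i; split => //; rewrite /O'.
by case: H => [[-> ->]|[-> ->]].
Qed.
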